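(* Let $N\ge0$ be an integer, take $\tau_1=1$, $\tau_2=-1$, $\tau_3=-2N-2-\alpha-\beta$ and $\tau_0$ arbitrary, so that $M=XL-LX+\tau_3X+\tau_0=2x(x-1)\partial_x+(\alpha+\beta+\tau_3+2)x+\tau_0-\alpha-1$. Then $L$ and $M$ preserve the space of polynomials of degree $\le N$; the polynomials $\psi_n(x)=x^n(1-x)^{N-n}$, $n=0,\dots,N$, satisfy $M\psi_n=(\tau_0-2n-\alpha-1)\psi_n$; and $$L\psi_n=(N-n)(N-n+\beta)\psi_{n+1}+\big(2n^2+(\alpha-\beta-2N)n-(\alpha+1)N\big)\psi_n+n(n+\alpha)\psi_{n-1},$$ with $\psi_{-1}:=0$, $\psi_{N+1}:=0$.
   Context: $L=x(1-x)\partial_x^2+\big(\alpha+1-(\alpha+\beta+2)x\big)\partial_x$ with real $\alpha,\beta>-1$, and $X$ is multiplication by $x$. *)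

(* Defs.v *)
From HB Require Import structures.
From mathcomp Require Import all_boot all_order all_algebra.
Set Implicit Arguments. Unset Strict Implicit. Unset Printing Implicit Defensive.
Import Order.TTheory GRing.Theory Num.Theory.
Local Open Scope ring_scope.

Definition Lop (R : realFieldType) (alpha beta : R) (p : {poly R}) : {poly R} :=
  'X * (1 - 'X) * p^`(2) + ((alpha + 1)%:P - (alpha + beta + 2) *: 'X) * p^`().

Definition Xop (R : realFieldType) (p : {poly R}) : {poly R} := 'X * p.

Definition Mop (R : realFieldType) (alpha beta tau3 tau0 : R) (p : {poly R}) : {poly R} :=
  Xop (Lop alpha beta p) - Lop alpha beta (Xop p) + tau3 *: Xop p + tau0 *: p.

(* psi_n = x^n (1-x)^(N-n) for n <= N, and psi_n := 0 for n > N (so psi_(N+1) = 0) *)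
Definition psi (R : realFieldType) (N n : nat) : {poly R} :=
  if (n <= N)%N then 'X^n * (1 - 'X) ^+ (N - n) else 0.

(* Main.v *)
Require Import Defs.
From HB Require Import structures.
From mathcomp Require Import all_boot all_order all_algebra.
From mathcomp Require Import ring.
Import Order.TTheory GRing.Theory Num.Theory.
Local Open Scope ring_scope.

Section H.
Variable R : realFieldType.
Implicit Types p q : {poly R}.

Lemma d2E p : p^`(2) = p^`()^`(). Proof. by []. Qed.

Lemma e1 n : 'X * ('X^n : {poly R})^`() = n%:R *: 'X^n.
Proof.
rewrite derivXn; case: n => [|n]; first by rewrite mulr0n mulr0 scale0r.
by rewrite mulrnAr -exprS -scaler_nat.
Qed.

Lemma e2 n : 'X * ('X * ('X^n : {poly R})^`()^`()) = (n%:R * (n%:R - 1)) *: 'X^n.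
Proof.
have h := congr1 deriv (e1 n).
rewrite derivM derivX mul1r derivZ in h.
have h2 : 'X * ('X^n : {poly R})^`()^`() = (n%:R - 1) *: ('X^n)^`().
  by rewrite scalerBl scale1r -h addrC addKr.
by rewrite h2 -scalerAr e1 scalerA mulrC.
Qed.

Lemma e3 m : (1 - 'X) * ((1 - 'X) ^+ m : {poly R})^`() = - (m%:R) *: (1 - 'X) ^+ m.
Proof.
rewrite deriv_exp derivB derivC derivX sub0r; case: m => [|m].
  by rewrite mulr0n mulr0 scaleNr scale0r oppr0.
rewrite mulrnAr /= mulN1r mulrN -exprS scaleNr scaler_nat mulNrn.
by [].
Qed.

Lemma e4 m : (1 - 'X) * ((1 - 'X) * ((1 - 'X) ^+ m : {poly R})^`()^`()) = (- m%:R * (1 - m%:R)) *: (1 - 'X) ^+ m.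
Proof.
have h := congr1 deriv (e3 m).
rewrite derivM derivB derivC derivX sub0r derivZ in h.
have h2 : (1 - 'X) * ((1 - 'X) ^+ m : {poly R})^`()^`() = (1 - m%:R) *: ((1 - 'X) ^+ m)^`().
  set B1 := ((1 - 'X) ^+ m)^`() in h *.
  rewrite scalerBl scale1r.
  have -> : (1 - 'X) * B1^`() = - m%:R *: B1 - (-1 * B1) by rewrite -h addrAC subrr add0r.
  by rewrite mulN1r opprK scaleNr addrC.
by rewrite h2 -scalerAr e3 scalerA mulrC.
Qed.
End H.

Lemma part1 (R : realFieldType) (alpha beta tau3 tau0 : R) p :
  Mop alpha beta tau3 tau0 p = 2%:R *: ('X * ('X - 1)) * p^`()
           + ((alpha + beta + tau3 + 2) *: 'X + (tau0 - alpha - 1)%:P) * p.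
Proof.
rewrite /Mop /Xop /Lop !d2E !derivE -!mul_polyC.
rewrite !polyCB !polyCD polyC1.
ring.
Qed.

Lemma sizeL (R : realFieldType) (alpha beta : R) N (p : {poly R}) :
  (size p <= N.+1)%N -> (size (Lop alpha beta p) <= N.+1)%N.
Proof.
move/leq_sizeP=> hp; apply/leq_sizeP => k hk.
have -> : Lop alpha beta p = 'X * p^`()^`() - 'X * ('X * p^`()^`())
   + (alpha + 1) *: p^`() - (alpha + beta + 2) *: ('X * p^`()).
  rewrite /Lop d2E -!mul_polyC !polyCD polyC1; ring.
case: k hk => [//|k] hk.
rewrite !coefD !coefN !coefZ !coefXM /= !coef_deriv.
rewrite (hp k.+2) ?(hp k.+1) //; last by apply: leqW.
case: k hk => [|k] hk /=; rewrite ?coef_deriv ?(hp k.+2) ?(hp k.+1) //; 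
  by rewrite ?mul0rn ?mulr0 ?subr0 ?addr0.
Qed.

Lemma sizeM (R : realFieldType) (alpha beta tau0 : R) N (p : {poly R}) :
  (size p <= N.+1)%N ->
  (size (Mop alpha beta (- (2 * N%:R + 2) - alpha - beta) tau0 p) <= N.+1)%N.
Proof.
move/leq_sizeP=> hp; apply/leq_sizeP => k hk.
rewrite part1.
set c := (alpha + beta + _ + 2).
have hc : c = - (2 * N%:R) by rewrite /c; ring.
have -> : 2%:R *: ('X * ('X - 1)) * p^`() + (c *: 'X + (tau0 - alpha - 1)%:P) * p
   = 2%:R *: ('X * ('X * p^`())) - 2%:R *: ('X * p^`()) + c *: ('X * p)
     + (tau0 - alpha - 1) *: p.
  rewrite -!mul_polyC; ring.
case: k hk => [//|k] hk.
rewrite !coefD !coefN !coefZ !coefXM /= !coef_deriv.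
rewrite (hp k.+1) // mul0rn !mulr0 subr0 addr0.
case: k hk => [|k] hk /=.
  by rewrite hc; move: hk; rewrite ltnS leqn0 => /eqP ->; rewrite mulr0 oppr0 mul0r addr0.
case: (ltnP N k.+1) => hN; first by rewrite hp // mul0rn mulr0 mulr0 addr0.
rewrite hc; have -> : N = k.+1 by apply/eqP; rewrite eqn_leq hN -ltnS hk.
rewrite -mulr_natl; ring.
Qed.

Lemma psiE (R : realFieldType) n m : psi R (n + m) n = 'X^n * (1 - 'X) ^+ m.
Proof. by rewrite /psi leq_addr addKn. Qed.

Lemma part3 (R : realFieldType) (alpha beta tau0 : R) n m :
  Mop alpha beta (- (2 * (n + m)%N%:R + 2) - alpha - beta) tau0 (psi R (n + m) n)
  = (tau0 - 2 * n%:R - alpha - 1) *: psi R (n + m) n.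
Proof.
rewrite part1 psiE.
transitivity (2%:R%:P * (('X - 1) * ('X * ('X^n)^`()) * (1 - 'X) ^+ m
    - 'X * 'X^n * ((1 - 'X) * ((1 - 'X) ^+ m)^`()))
   + ((- (2 * (n + m)%N%:R)) *: 'X + (tau0 - alpha - 1)%:P) * ('X^n * (1 - 'X) ^+ m)).
  rewrite derivM -!mul_polyC; ring.
rewrite e1 e3 natrD -!mul_polyC; ring.
Qed.

Lemma X1X_neq0 (R : realFieldType) : ('X * (1 - 'X) : {poly R}) != 0.
Proof.
rewrite mulf_neq0 ?polyX_eq0 //; apply/eqP => h.
have := congr1 (fun q : {poly R} => q`_0) h; rewrite /= coefB coef1 coefX coef0 subr0.
by move/eqP; rewrite oner_eq0.
Qed.

Lemma part4 (R : realFieldType) (alpha beta : R) n m :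
  Lop alpha beta (psi R (n + m) n) =
       ((n + m - n)%N%:R * ((n + m - n)%N%:R + beta)) *: psi R (n + m) n.+1
       + (2 * n%:R ^+ 2 + (alpha - beta - 2 * (n + m)%N%:R) * n%:R - (alpha + 1) * (n + m)%N%:R)
           *: psi R (n + m) n
       + (if (0 < n)%N then (n%:R * (n%:R + alpha)) *: psi R (n + m) n.-1 else 0).
Proof.
rewrite addKn.
have -> : (if (0 < n)%N then (n%:R * (n%:R + alpha)) *: psi R (n + m) n.-1 else 0)
   = (n%:R + alpha) *: (n%:R *: psi R (n + m) n.-1).
  by case: n => [|n]; rewrite ?mul0rn ?scale0r ?scaler0 // scalerA mulrC.
have h1 : m%:R *: ((1 - 'X) * psi R (n + m) n.+1) = m%:R *: ('X * ('X^n * (1 - 'X) ^+ m)).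
  case: m => [|m]; first by rewrite !scale0r.
  rewrite /psi addnS ltnS leq_addr subSS addKn; congr (_ *: _).
  by rewrite exprS exprS; ring.
have h2 : n%:R *: ('X * psi R (n + m) n.-1) = n%:R *: ((1 - 'X) * ('X^n * (1 - 'X) ^+ m)).
  clear h1; case: n => [|n]; first by rewrite !scale0r.
  rewrite /psi /= (leq_trans (leqnSn n)) ?leq_addr // addSn subSn ?leq_addr // addKn.
  congr (_ *: _); by rewrite exprS exprS; ring.
move: h1 h2; rewrite -!mul_polyC => h1 h2.
rewrite psiE.
apply: (mulfI (X1X_neq0 R)).
transitivity (((1 - 'X) * (1 - 'X)) * ('X * ('X * ('X^n)^`()^`())) * (1 - 'X) ^+ m
   + 2%:R * 'X * (1 - 'X) * ('X * ('X^n)^`()) * ((1 - 'X) * ((1 - 'X) ^+ m)^`())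
   + 'X * 'X * 'X^n * ((1 - 'X) * ((1 - 'X) * ((1 - 'X) ^+ m)^`()^`()))
   + ((alpha + 1)%:P - (alpha + beta + 2) *: 'X) *
       ((1 - 'X) * ('X * ('X^n)^`()) * (1 - 'X) ^+ m + 'X * 'X^n * ((1 - 'X) * ((1 - 'X) ^+ m)^`()))).
  rewrite /Lop d2E !(derivM, derivD) -!mul_polyC; ring.
rewrite e1 e2 e3 e4.
transitivity ((m%:R + beta)%:P * ('X * (m%:R%:P * ((1 - 'X) * psi R (n + m) n.+1)))
   + 'X * (1 - 'X) * ((2 * n%:R ^+ 2 + (alpha - beta - 2 * (n + m)%N%:R) * n%:R - (alpha + 1) * (n + m)%N%:R)%:P * ('X^n * (1 - 'X) ^+ m))
   + (n%:R + alpha)%:P * ((1 - 'X) * (n%:R%:P * ('X * psi R (n + m) n.-1)))); last first.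
  ring.
rewrite h1 h2 natrD -!mul_polyC; ring.
Qed.

Theorem mainTheorem9 (R : realFieldType) (alpha beta tau0 : R) (N : nat)
  (halpha : -1 < alpha) (hbeta : -1 < beta) :
  let tau3 := - (2 * N%:R + 2) - alpha - beta in
  let L := Lop alpha beta in
  let M := Mop alpha beta tau3 tau0 in
  (forall p : {poly R},
     M p = 2%:R *: ('X * ('X - 1)) * p^`()
           + ((alpha + beta + tau3 + 2) *: 'X + (tau0 - alpha - 1)%:P) * p) /\
  (forall p : {poly R}, (size p <= N.+1)%N ->
     (size (L p) <= N.+1)%N /\ (size (M p) <= N.+1)%N) /\
  (forall n : nat, (n <= N)%N ->
     M (psi R N n) = (tau0 - 2 * n%:R - alpha - 1) *: psi R N n) /\
  (forall n : nat, (n <= N)%N ->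
     L (psi R N n) =
       ((N - n)%N%:R * ((N - n)%N%:R + beta)) *: psi R N n.+1
       + (2 * n%:R ^+ 2 + (alpha - beta - 2 * N%:R) * n%:R - (alpha + 1) * N%:R)
           *: psi R N n
       + (if (0 < n)%N then (n%:R * (n%:R + alpha)) *: psi R N n.-1 else 0)).
Proof.
move=> tau3 L M; rewrite /M /L /tau3; clear M L tau3.
split; first by move=> p; exact: part1.
split; first by move=> p hp; split; [exact: sizeL | exact: sizeM].
split.
  move=> n hn; have [m ->] : exists m, N = (n + m)%N by exists (N - n)%N; rewrite subnKC.
  exact: part3.
move=> n hn; have [m ->] : exists m, N = (n + m)%N by exists (N - n)%N; rewrite subnKC.
exact: part4.
Qed.
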